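(* Let $\mathcal C$ be a class of groups with invariant $[0,\infty)$-valued pseudo-norms which is closed under taking subgroups (with restricted pseudo-norm) and under isomorphism. Let $G=\mathsf F_n/N$ be finitely presented, where $n\in\mathbb N$ and $\mathsf F_n$ is free with basis $x_1,\dots,x_n$, and let $\ell$ be the word norm on $G$ associated with $\overline S$ for $S=\{x_1^{\pm1}N,\dots,x_n^{\pm1}N\}$. If $(G,\ell)$ is metrically LE$\mathcal C$, then $(G,\ell)$ is metrically fully residually $\mathcal C$.
   Context: $\Lambda=[0,\infty)$. A pseudo-norm on $G$ is $\ell:G\to\Lambda$ with $\ell(1)=0$, $\ell(g)=\ell(g^{-1})$, $\ell(gh)\le\ell(g)+\ell(h)$; invariant if $\ell(h^{-1}gh)=\ell(g)$. $\overline S$ is the smallest conjugation-invariant subset containing $S$; the word norm is $\ell(g)=\min\{k:g=s_1\cdots s_k,s_i\in\overline S\}$. For pseudo-normed $(G_1,\ell_1),(G_2,\ell_2)$, finite $D\subseteq G_1$ and finite $Q\subseteq\Lambda\cap\mathbb Q$ with $0\in Q$, $\varphi:G_1\to G_2$ is a $D$-$Q$-almost-homomorphism if injective on $D$, $\varphi(hg)=\varphi(h)\varphi(g)$ whenever $h,g,hg\in D$, and $\ell_1(g)\,\square\,q\iff\ell_2(\varphi(g))\,\square\,q$ for all $g\in D,q\in Q,\square\in\{<,=,>\}$. $(G,\ell)$ is metrically LE$\mathcal C$ if for all such $D,Q$ there are $(C,\ell_C)\in\mathcal C$ and a $D$-$Q$-almost-homomorphism $G\to C$; it is metrically fully residually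 $\mathcal C$ if for all such $D,Q$ there are $(C,\ell_C)\in\mathcal C$ and a group homomorphism $\varphi:G\to C$ with $\ell_C(\varphi(g))\le\ell(g)$ for all $g\in G$, which is a $D$-$Q$-almost-homomorphism. *)

(* Defs.v *)
From Stdlib Require Import Reals QArith List ProofIrrelevance.
Open Scope R_scope.

Record Grp := MkGrp {
  gcar :> Type;
  gmul : gcar -> gcar -> gcar;
  gone : gcar;
  ginv : gcar -> gcar;
  gmulA : forall x y z, gmul x (gmul y z) = gmul (gmul x y) z;
  gmul1l : forall x, gmul gone x = x;
  gmul1r : forall x, gmul x gone = x;
  gmulVl : forall x, gmul (ginv x) x = gone;
  gmulVr : forall x, gmul x (ginv x) = gone }.

Arguments gmul {g}. Arguments gone {g}. Arguments ginv {g}.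

(** Groups equipped with a real-valued function (intended: pseudo-norm). *)
Record PNG := MkPNG { pgrp :> Grp; pnorm : pgrp -> R }.

Definition is_pseudo_norm (G : Grp) (l : G -> R) : Prop :=
  l gone = 0 /\ (forall g, 0 <= l g) /\ (forall g, l (ginv g) = l g) /\
  (forall g h, l (gmul g h) <= l g + l h).

Definition is_inv_pseudo_norm (G : Grp) (l : G -> R) : Prop :=
  is_pseudo_norm G l /\ forall g h, l (gmul (ginv h) (gmul g h)) = l g.

Definition is_hom (G H : Grp) (f : G -> H) : Prop :=
  forall x y, f (gmul x y) = gmul (f x) (f y).

Section Sub.
Variables (G : Grp) (P : G -> Prop) (h1 : P gone)
  (hm : forall x y, P x -> P y -> P (gmul x y)) (hi : forall x, P x -> P (ginv x)).

Let S := {x : G | P x}.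
Let smul (x y : S) : S := exist P (gmul (proj1_sig x) (proj1_sig y))
   (hm _ _ (proj2_sig x) (proj2_sig y)).
Let sone : S := exist P gone h1.
Let sinv (x : S) : S := exist P (ginv (proj1_sig x)) (hi _ (proj2_sig x)).

Lemma sub_eq (u v : S) : proj1_sig u = proj1_sig v -> u = v.
Proof. destruct u, v; simpl; intros ->; f_equal; apply proof_irrelevance. Qed.

Definition sub_grp : Grp.
Proof.
refine (@MkGrp S smul sone sinv _ _ _ _ _); intros; apply sub_eq; simpl.
- apply gmulA. - apply gmul1l. - apply gmul1r. - apply gmulVl. - apply gmulVr.
Defined.
End Sub.

Definition sub_png (X : PNG) (P : X -> Prop) (h1 : P gone)
  (hm : forall x y, P x -> P y -> P (gmul x y)) (hi : forall x, P x -> P (ginv x))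
  : PNG :=
  MkPNG (sub_grp X P h1 hm hi) (fun x => pnorm X (proj1_sig x)).

Definition subgroup_closed (C : PNG -> Prop) : Prop :=
  forall (X : PNG) (P : X -> Prop) (h1 : P gone)
    (hm : forall x y, P x -> P y -> P (gmul x y)) (hi : forall x, P x -> P (ginv x)),
    C X -> C (sub_png X P h1 hm hi).

Definition iso_closed (C : PNG -> Prop) : Prop :=
  forall (X Y : PNG) (f : X -> Y), C X -> is_hom X Y f ->
    (forall x y, f x = f y -> x = y) -> (forall y, exists x, f x = y) ->
    (forall x, pnorm Y (f x) = pnorm X x) -> C Y.

Definition admissible_Q (Qs : list Q) : Prop :=
  Forall (fun q => 0 <= Q2R q) Qs /\ Exists (fun q => Q2R q = 0) Qs.

Definition almost_hom (X Y : PNG) (D : list X) (Qs : list Q) (f : X -> Y) : Prop :=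
  (forall g h, In g D -> In h D -> f g = f h -> g = h) /\
  (forall h g, In h D -> In g D -> In (gmul h g) D -> f (gmul h g) = gmul (f h) (f g)) /\
  (forall g q, In g D -> In q Qs ->
     (pnorm X g < Q2R q <-> pnorm Y (f g) < Q2R q) /\
     (pnorm X g = Q2R q <-> pnorm Y (f g) = Q2R q) /\
     (pnorm X g > Q2R q <-> pnorm Y (f g) > Q2R q)).

Definition metrically_LE (C : PNG -> Prop) (X : PNG) : Prop :=
  forall (D : list X) (Qs : list Q), admissible_Q Qs ->
    exists Y : PNG, C Y /\ exists f : X -> Y, almost_hom X Y D Qs f.

Definition metrically_fully_residually (C : PNG -> Prop) (X : PNG) : Prop :=
  forall (D : list X) (Qs : list Q), admissible_Q Qs ->
    exists Y : PNG, C Y /\ exists f : X -> Y,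
      is_hom X Y f /\ (forall g, pnorm Y (f g) <= pnorm X g) /\ almost_hom X Y D Qs f.

(** Words in the free group F_n: letters (i, true) = x_i, (i, false) = x_i^-1. *)
Definition word := list (nat * bool).
Definition valid_word (n : nat) (w : word) : Prop := Forall (fun p => (fst p < n)%nat) w.

Definition gen_pow (G : Grp) (a : nat -> G) (p : nat * bool) : G :=
  if snd p then a (fst p) else ginv (a (fst p)).

Definition eval (G : Grp) (a : nat -> G) (w : word) : G :=
  fold_right (fun p acc => gmul (gen_pow G a p) acc) gone w.

(** The congruence on words whose quotient is F_n / <<Rel>>. *)
Inductive pres_eq (Rel : list word) : word -> word -> Prop :=
| pe_refl w : pres_eq Rel w w
| pe_sym u v : pres_eq Rel u v -> pres_eq Rel v u
| pe_trans u v w : pres_eq Rel u v -> pres_eq Rel v w -> pres_eq Rel u w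
| pe_cancel u v i b : pres_eq Rel (u ++ (i, b) :: (i, negb b) :: v) (u ++ v)
| pe_rel u v r : In r Rel -> pres_eq Rel (u ++ r ++ v) (u ++ v).

(** G = F_n / N with N the normal closure of Rel, via g_i = x_i N = a i. *)
Definition presents (n : nat) (Rel : list word) (G : Grp) (a : nat -> G) : Prop :=
  Forall (valid_word n) Rel /\
  (forall g : G, exists w, valid_word n w /\ eval G a w = g) /\
  (forall u v, valid_word n u -> valid_word n v ->
     (eval G a u = eval G a v <-> pres_eq Rel u v)).

Definition in_Sbar (n : nat) (G : Grp) (a : nat -> G) (s : G) : Prop :=
  exists i b (h : G), (i < n)%nat /\ s = gmul (ginv h) (gmul (gen_pow G a (i, b)) h).

Inductive prod_len (n : nat) (G : Grp) (a : nat -> G) : G -> nat -> Prop :=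
| pl_nil : prod_len n G a gone 0
| pl_cons s g k : in_Sbar n G a s -> prod_len n G a g k -> prod_len n G a (gmul s g) (S k).

Definition is_word_norm (n : nat) (G : Grp) (a : nat -> G) (l : G -> R) : Prop :=
  forall g, exists k, prod_len n G a g k /\ l g = INR k /\
    (forall m, prod_len n G a g m -> (k <= m)%nat).

(* Main.v *)
Require Import Defs.
From Stdlib Require Import Reals QArith List.
From Stdlib Require Import Lra Lia ClassicalEpsilon.

Lemma inv_uniq (G : Grp) (x y : G) : gmul x y = gone -> x = ginv y.
Proof.
  intro H. rewrite <- (gmul1r G x), <- (gmulVr G y), gmulA, H, gmul1l. reflexivity.
Qed.

Lemma idem_one (G : Grp) (x : G) : gmul x x = x -> x = gone.
Proof.
  intro H. transitivity (gmul (ginv x) (gmul x x)).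
  - rewrite gmulA, gmulVl, gmul1l; reflexivity.
  - rewrite H. apply gmulVl.
Qed.

Lemma inv_one (G : Grp) : ginv (@gone G) = gone.
Proof. symmetry. apply inv_uniq. apply gmul1l. Qed.

Lemma eval_app (G : Grp) (a : nat -> G) u v :
  eval G a (u ++ v) = gmul (eval G a u) (eval G a v).
Proof.
  induction u as [|p u IH]; simpl.
  - rewrite gmul1l; reflexivity.
  - rewrite IH, gmulA; reflexivity.
Qed.

Lemma pres_eval (G : Grp) (b : nat -> G) Rel
  (hR : forall r, In r Rel -> eval G b r = gone) u v :
  pres_eq Rel u v -> eval G b u = eval G b v.
Proof.
  induction 1; try congruence.
  - rewrite !eval_app. f_equal. simpl. unfold gen_pow; destruct b0; simpl;
    rewrite gmulA, ?gmulVr, ?gmulVl, gmul1l; reflexivity.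
  - rewrite !eval_app, (hR r), gmul1l by assumption. reflexivity.
Qed.

Lemma hom_one (G H : Grp) (f : G -> H) : is_hom G H f -> f gone = gone.
Proof.
  intro Hf. apply idem_one. rewrite <- Hf, gmul1l. reflexivity.
Qed.

Lemma hom_inv (G H : Grp) (f : G -> H) : is_hom G H f -> forall x, f (ginv x) = ginv (f x).
Proof.
  intros Hf x. apply inv_uniq. rewrite <- Hf, gmulVl. apply hom_one; assumption.
Qed.

Fixpoint Lw (G : Grp) (a : nat -> G) (w : word) : list G :=
  match w with
  | nil => gone :: nil
  | p :: s => eval G a (p :: s) :: a (fst p) :: ginv (a (fst p)) :: Lw G a s
  end.

Lemma eval_in_Lw (G : Grp) (a : nat -> G) w : In (eval G a w) (Lw G a w).
Proof. destruct w; simpl; auto. Qed.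

Lemma phi_eval (G Y : Grp) (a : nat -> G) (phi : G -> Y) (D : list G)
  (Hmul : forall h g, In h D -> In g D -> In (gmul h g) D -> phi (gmul h g) = gmul (phi h) (phi g))
  (H1 : In gone D) w :
  incl (Lw G a w) D -> phi (eval G a w) = eval Y (fun i => phi (a i)) w.
Proof.
  assert (P1 : phi gone = gone).
  { apply idem_one. rewrite <- Hmul; try rewrite gmul1l; auto. }
  induction w as [|p s IH]; intro Hi; simpl.
  - exact P1.
  - assert (Hs : incl (Lw G a s) D) by (intros x Hx; apply Hi; simpl; auto).
    assert (Ha : In (a (fst p)) D) by (apply Hi; simpl; auto).
    assert (Hai : In (ginv (a (fst p))) D) by (apply Hi; simpl; auto).
    assert (Hg : In (gen_pow G a p) D) by (unfold gen_pow; destruct (snd p); auto).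
    assert (He : In (gmul (gen_pow G a p) (eval G a s)) D) by (apply Hi; simpl; auto).
    rewrite Hmul; auto. 2: apply Hs, eval_in_Lw.
    rewrite IH by exact Hs. f_equal.
    destruct p as [i []]; unfold gen_pow; simpl in *; auto.
    apply inv_uniq. rewrite <- Hmul; auto. rewrite gmulVl; auto. rewrite gmulVl; auto.
Qed.

Theorem corollary5p8 (C : PNG -> Prop)
  (hCnorm : forall X, C X -> is_inv_pseudo_norm X (pnorm X))
  (hCsub : subgroup_closed C) (hCiso : iso_closed C)
  (n : nat) (Rel : list word) (G : Grp) (a : nat -> G)
  (hpres : presents n Rel G a)
  (l : G -> R) (hl : is_word_norm n G a l) :
  metrically_LE C (MkPNG G l) -> metrically_fully_residually C (MkPNG G l).
Proof.
  intros HLE D Qs HQ.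
  destruct hpres as [hvalid [hsurj hiff]].
  pose (ch := fun g => proj1_sig (constructive_indefinite_description _ (hsurj g))).
  assert (hch : forall g, valid_word n (ch g) /\ eval G a (ch g) = g).
  { intro g. exact (proj2_sig (constructive_indefinite_description _ (hsurj g))). }
  set (D' := (D ++ gone :: map a (seq 0 n) ++ flat_map (Lw G a) (Rel ++ map ch D))%list).
  set (Qs' := (Qs ++ (1%Q :: nil))%list).
  assert (HQ' : admissible_Q Qs').
  { destruct HQ as [HQ1 HQ2]; split; unfold Qs'.
    - apply Forall_app; split; auto. constructor; auto.
      unfold Q2R; simpl; lra.
    - apply Exists_app; auto. }
  destruct (HLE D' Qs' HQ') as [Y [HY [phi [Hinj [Hmul Hnorm]]]]].
  simpl in phi, Hinj, Hmul, Hnorm.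
  assert (H1 : In gone D') by (unfold D'; apply in_or_app; simpl; auto).
  assert (HinL : forall w, In w (Rel ++ map ch D)%list -> incl (Lw G a w) D').
  { intros w Hw x Hx. unfold D'. apply in_or_app; right; right.
    apply in_or_app; right. apply in_flat_map. eauto. }
  set (b := fun i => phi (a i)).
  assert (HR : forall r, In r Rel -> eval Y b r = gone).
  { intros r Hr. unfold b. rewrite <- (phi_eval G Y a phi D'); auto.
    2: apply HinL, in_or_app; auto.
    assert (E : eval G a r = gone).
    { change (@gone G) with (eval G a nil).
      apply hiff.
      - rewrite Forall_forall in hvalid; auto.
      - constructor.
      - pose proof (pe_rel Rel nil nil r Hr) as P. simpl in P.
        rewrite app_nil_r in P. exact P. }
    change (phi (eval G a r) = gone). rewrite E. apply idem_one. rewrite <- Hmul; try rewrite gmul1l; auto. }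
  set (psi := fun g => eval Y b (ch g)).
  assert (Hwd : forall g w, valid_word n w -> eval G a w = g -> psi g = eval Y b w).
  { intros g w Hw Hg. unfold psi. apply pres_eval with (Rel := Rel); auto.
    apply hiff; [apply hch | exact Hw |]. rewrite Hg. apply hch. }
  assert (Hhom : is_hom G Y psi).
  { intros x y. rewrite (Hwd (gmul x y) (ch x ++ ch y)%list).
    - rewrite eval_app. reflexivity.
    - apply Forall_app; split; apply hch.
    - rewrite eval_app. f_equal; apply hch. }
  assert (HD : forall g, In g D -> psi g = phi g).
  { intros g Hg. unfold psi, b. rewrite <- (phi_eval G Y a phi D'); auto.
    - f_equal. apply hch.
    - apply HinL. apply in_or_app; right. apply in_map; auto. }
  assert (Ha : forall i, (i < n)%nat -> psi (a i) = phi (a i)).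
  { intros i Hi. rewrite (Hwd (a i) ((i, true) :: nil)).
    - simpl. apply gmul1r.
    - constructor; auto.
    - simpl. apply gmul1r. }
  destruct (hCnorm Y HY) as [[N1 [N2 [N3 N4]]] N5].
  assert (Hone : Q2R 1 = 1%R) by (unfold Q2R; simpl; lra).
  assert (Hai : forall i, (i < n)%nat -> (pnorm Y (phi (a i)) <= 1)%R).
  { intros i Hi.
    assert (Hin : In (a i) D').
    { unfold D'. apply in_or_app; right; right. apply in_or_app; left.
      apply in_map. apply in_seq. lia. }
    assert (Hl : (l (a i) <= 1)%R).
    { destruct (hl (a i)) as [k [Hk1 [Hk2 Hk3]]].
      assert (P : prod_len n G a (a i) 1%nat).
      { rewrite <- (gmul1r G (a i)) at 1. constructor; [|constructor].
        exists i, true, gone. split; auto. simpl. rewrite inv_one, gmul1l, gmul1r. reflexivity. }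
      apply Hk3 in P. rewrite Hk2. replace 1%R with (INR 1) by reflexivity.
      apply le_INR; exact P. }
    assert (Hq : In 1%Q Qs') by (unfold Qs'; apply in_or_app; simpl; auto).
    destruct (Hnorm (a i) 1%Q Hin Hq) as [E1 [E2 E3]]. simpl in E1, E2, E3.
    rewrite Hone in *. destruct (Rle_lt_or_eq_dec _ _ Hl) as [L|L].
    - apply Rlt_le. apply E1. exact L.
    - right. apply E2. exact L. }
  exists Y. split; auto. exists psi. split; [exact Hhom|]. split.
  - intro g. simpl. destruct (hl g) as [k [Hk1 [Hk2 _]]]. rewrite Hk2.
    clear Hk2. induction Hk1.
    + rewrite hom_one by exact Hhom. rewrite N1. simpl; lra.
    + rewrite Hhom, S_INR.
      apply Rle_trans with (pnorm Y (psi s) + pnorm Y (psi g))%R; auto.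
      cut (pnorm Y (psi s) <= 1)%R; [lra|].
      destruct H as [i [b0 [h [Hi ->]]]].
      rewrite !Hhom, hom_inv by exact Hhom. rewrite N5.
      destruct b0; unfold gen_pow; simpl.
      * rewrite Ha by exact Hi. auto.
      * rewrite hom_inv, N3, Ha by auto. auto.
  - split; [|split].
    + intros g h Hg Hh E. simpl in E. rewrite !HD in E by auto.
      apply Hinj; auto; unfold D'; apply in_or_app; auto.
    + intros h g _ _ _. apply Hhom.
    + intros g q Hg Hq. simpl. rewrite HD by auto.
      apply Hnorm. unfold D'; apply in_or_app; auto.
      unfold Qs'; apply in_or_app; auto.
Qed.
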